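(* Let $T$ be a tree of diameter $d$ on $n$ vertices with maximum Wiener index. Let $x$ be a special vertex of $T$ and let $T_1,T_2$ be components of $T-x$ such that each of them contains exactly one broom vertex of $T$ and $d(y,y')<d$ for all leaves $y\in V(T_1)$, $y'\in V(T_2)$. Let $y_1\in V(T_1)$, $y_2\in V(T_2)$ be leaves of $T$, $y_1'$ the broom vertex adjacent to $y_1$, $p=d(x,y_1)=d(x,y_2)$, and $t_i$ the number of leaves of $T$ in $T_i$ ($i\in\{1,2\}$). Let $T'=T_2\xrightarrow{T} y_1'$. If $t_1=t_2+1$, then $W(T)\geq W(T')$ if and only if $$t_1\geq \sqrt{\frac{p(3n+2p-7)+3}{12}}-p+\frac32.$$
   Context: All graphs are finite and simple; $d(u,v)$ denotes distance and $W(G)=\sum_{\{u,v\}\subseteq V(G)} d(u,v)$ is the Wiener index. A tree $T$ of order $n$ and diameter $d$ has maximum Wiener index if $W(T')\leq W(T)$ for every tree $T'$ of order $n$ and diameter $d$. A leaf is a vertex of degree $1$; a broom vertex of $T$ is a vertex adjacent to a leaf of $T$. A vertex $x$ of a tree $T$ of diameter $d$ is special if $\deg(x)\geq 3$ and there exist components $T_1,T_2$ of $T-x$ such that each contains exactly one broom vertex of $T$ and $d(y,y')<d$ for all leaves $y\in V(T_1)$, $y'\in V(T_2)$. For such $x,T_1,T_2$ and the broom vertex $y_1'$ of $T_1$, the tree $T_2\xrightarrow{T} y_1'$ is obtained from $T$ by deleting all vertices of $T_2$ and attaching $|V(T_2)|$ new leaves to $y_1'$. *)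

(* Defs.v *)
From HB Require Import structures.
From mathcomp Require Import all_boot all_order all_algebra.
Set Implicit Arguments. Unset Strict Implicit. Unset Printing Implicit Defensive.
Import Order.TTheory GRing.Theory Num.Theory.

Section Graph.
Variable T : finType.
Implicit Type e : rel T.

Definition simple_graph e := irreflexive e /\ symmetric e.

Definition connected e := forall x y : T, connect e x y.

Definition acyclic e :=
  forall (x : T) (s : seq T), uniq (x :: s) -> path e x s -> 2 <= size s ->
    ~~ e (last x s) x.

Definition is_tree e := [/\ simple_graph e, connected e & acyclic e].

Fixpoint ball e (k : nat) (x : T) : {set T} :=
  match k with
  | 0 => [set x]
  | k'.+1 => ball e k' x :|: [set z | [exists w in ball e k' x, e w z]]
  end.

(* graph distance: least k with y within k steps of x (only used on
   connected graphs, where this k is < #|T|) *)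
Definition dist e (x y : T) : nat :=
  find (fun k => y \in ball e k x) (iota 0 #|T|).

Definition deg e (x : T) : nat := #|[set y | e x y]|.
Definition leaf e (x : T) : bool := deg e x == 1.
Definition broom e (x : T) : bool := [exists y, e x y && leaf e y].

Definition diameter e : nat := \max_(u : T) \max_(v : T) dist e u v.

(* Wiener index: sum over unordered pairs = half the sum over ordered pairs *)
Definition wiener e : nat := (\sum_(u : T) \sum_(v : T) dist e u v) %/ 2.

Definition del e (x : T) : rel T := [rel a b | [&& e a b, a != x & b != x]].

Definition component e (x v : T) : {set T} := [set w | connect (del e x) v w].

Definition is_component e (x : T) (C : {set T}) :=
  exists2 v, v != x & C = component e x v.

Definition leaves e (C : {set T}) : {set T} := [set y in C | leaf e y].

Definition one_broom e (C : {set T}) := #|[set b in C | broom e b]| = 1.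

Definition special e (x : T) :=
  3 <= deg e x /\
  exists C1 C2 : {set T},
    [/\ is_component e x C1, is_component e x C2, C1 != C2,
        one_broom e C1 /\ one_broom e C2 &
        forall y y', y \in leaves e C1 -> y' \in leaves e C2 ->
          dist e y y' < diameter e].

(* T_2 -->^T y : delete the vertices of C2 and attach |C2| new leaves to y.
   Modelled on the same vertex set: each vertex of C2 becomes a leaf
   attached to y, all other adjacencies are those of T. *)
Definition move_tree e (C2 : {set T}) (y : T) : rel T :=
  [rel a b | if a \in C2 then b == y else if b \in C2 then a == y else e a b].

End Graph.

Definition max_wiener (T : finType) (e : rel T) :=
  is_tree e /\
  forall (U : finType) (f : rel U),
    is_tree f -> #|U| = #|T| -> diameter f = diameter e -> wiener f <= wiener e.

(* Main.v *)
Require Import Defs.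
From HB Require Import structures.
From mathcomp Require Import all_boot all_order all_algebra.
From mathcomp Require Import zify ring lra.
Import Order.TTheory GRing.Theory Num.Theory.

Module Aux.
Set Implicit Arguments. Unset Strict Implicit. Unset Printing Implicit Defensive.

Ltac slia := repeat match goal with
  | H : ?P |- _ => lazymatch P with
     | is_true (leq _ _) => fail
     | @eq nat _ _ => fail
     | _ => clear H
     end
  end; lia.

Section Dist.
Variable T : finType.
Variable e : rel T.
Local Notation n := #|T|.
Local Notation d := (dist e).

Lemma dist_le u v k : v \in ball e k u -> d u v <= k.
Proof.
move=> H; rewrite /dist.
case: (ltnP k n) => hk.
- rewrite leqNgt; apply/negP => /(before_find 0).
  by rewrite nth_iota // add0n H.
- by apply: leq_trans (find_size _ _) _; rewrite size_iota.
Qed.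

Lemma dist_size u v : d u v <= n.
Proof. by rewrite /dist -{2}(size_iota 0 n) find_size. Qed.

Lemma dist_ball u v : d u v < n -> v \in ball e (d u v) u.
Proof.
rewrite /dist => H.
have := H; rewrite -{2}(size_iota 0 n) -has_find => /(nth_find 0).
by rewrite nth_iota // add0n.
Qed.

Lemma dist_self u : d u u = 0.
Proof. by apply/eqP; rewrite -leqn0; apply: dist_le; rewrite /= in_set1. Qed.

Lemma ball_edge k u a b : a \in ball e k u -> e a b -> b \in ball e k.+1 u.
Proof.
move=> Ha Hab; rewrite /= in_setU; apply/orP; right; rewrite inE.
by apply/existsP; exists a; rewrite Ha.
Qed.

Lemma dist_edge u a b : e a b -> d u b <= (d u a).+1.
Proof.
move=> Hab; case: (ltnP (d u a) n) => H.
- by apply: dist_le; apply: ball_edge Hab; apply: dist_ball.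
- by apply: leq_trans (dist_size _ _) (leqW H).
Qed.

Lemma lip_ball (f : T -> nat) u k w : (forall a b, e a b -> f b <= (f a).+1) ->
  w \in ball e k u -> f w <= f u + k.
Proof.
move=> Hf; elim: k w => [|k IH] w /=.
- by rewrite in_set1 => /eqP ->; rewrite addn0.
- rewrite in_setU => /orP [/IH H| ]; first by lia.
  rewrite inE => /existsP [a /andP [Ha Hab]].
  have := IH _ Ha; have := Hf _ _ Hab; lia.
Qed.

Lemma lip_ball' (f : T -> nat) u k w : (forall a b, e a b -> f a <= (f b).+1) ->
  w \in ball e k u -> f u <= f w + k.
Proof.
move=> Hf; elim: k w => [|k IH] w /=.
- by rewrite in_set1 => /eqP ->; rewrite addn0.
- rewrite in_setU => /orP [/IH H| ]; first by lia.
  rewrite inE => /existsP [a /andP [Ha Hab]].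
  have := IH _ Ha; have := Hf _ _ Hab; lia.
Qed.

Lemma lip_le f u v : (forall a b, e a b -> f b <= (f a).+1) -> d u v < n ->
  f v <= f u + d u v.
Proof. by move=> Hf H; apply: lip_ball Hf (dist_ball H). Qed.

Lemma lip_ge f u v : (forall a b, e a b -> f a <= (f b).+1) -> d u v < n ->
  f u <= f v + d u v.
Proof. by move=> Hf H; apply: lip_ball' Hf (dist_ball H). Qed.

Lemma path_ball u s : path e u s -> last u s \in ball e (size s) u.
Proof.
elim/last_ind: s => [|s a IH]; first by rewrite /= in_set1.
rewrite rcons_path last_rcons size_rcons => /andP [H1 H2].
exact: ball_edge (IH H1) H2.
Qed.

Lemma connect_dist u v : connect e u v -> d u v < n.
Proof.
case/connectP => s Hp ->.
case: (shortenP Hp) => s' Hp' Hu _.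
apply: leq_ltn_trans (dist_le (path_ball Hp')) _.
move/card_uniqP: Hu => /= Hc.
by have := max_card (mem (u :: s')); rewrite Hc.
Qed.

Lemma ball_connect k u v : v \in ball e k u -> connect e u v.
Proof.
elim: k v => [|k IH] v /=.
  by rewrite in_set1 => /eqP->; exact: connect0.
rewrite in_setU => /orP [/IH //|]; rewrite inE => /existsP [a /andP [Ha Hab]].
exact: connect_trans (IH _ Ha) (connect1 Hab).
Qed.

Lemma dist_tri u v w : d v w < n -> d u w <= d u v + d v w.
Proof. move=> H; apply: (lip_le (f := d u)) H => a b; exact: dist_edge. Qed.

Lemma dist_sym_le (se : symmetric e) u v : d u v < n -> d v u <= d u v.
Proof.
move=> H; have := lip_ge (f := d v) _ H; rewrite dist_self; apply.
by move=> a b Hab; apply: dist_edge; rewrite se.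
Qed.

Lemma dist_sym (se : symmetric e) (ce : connected e) u v : d u v = d v u.
Proof.
apply/eqP; rewrite eqn_leq !dist_sym_le //; exact: connect_dist.
Qed.

Lemma dist_lt (ce : connected e) u v : d u v < n.
Proof. exact: connect_dist. Qed.

Lemma dist0 u v : d u v = 0 -> u = v.
Proof.
move=> H; have : d u v < n by rewrite H; apply/card_gt0P; exists u.
by move/dist_ball; rewrite H /= in_set1 => /eqP.
Qed.


Lemma path_map_iota (h : nat -> T) a m :
  (forall k, a <= k < a + m -> e (h k) (h k.+1)) ->
  path e (h a) (map h (iota a.+1 m)).
Proof.
elim: m a => [|m IH] a H //=.
rewrite H ?addnS ?leqnn ?ltnS ?leq_addr //=.
apply: IH => k /andP [H1 H2]; apply: H; lia.
Qed.

Lemma last_map_iota (h : nat -> T) a m :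
  last (h a) (map h (iota a.+1 m)) = h (a + m).
Proof.
elim: m a => [|m IH] a /=; first by rewrite addn0.
by rewrite IH addSnnS.
Qed.

End Dist.

Section Tree.
Variable T : finType.
Variable e : rel T.
Hypothesis irr : irreflexive e.
Hypothesis se : symmetric e.
Hypothesis ce : connected e.
Hypothesis ac : acyclic e.
Variable x : T.
Local Notation n := #|T|.
Local Notation d := (dist e x).

Lemma d0 v : (d v == 0) = (v == x).
Proof.
apply/eqP/eqP => [/dist0 -> // | ->]; exact: dist_self.
Qed.

Lemma par_ex z : z != x -> exists y, e y z && ((d y).+1 == d z).
Proof.
move=> zx; have := dist_ball (dist_lt ce x z).
case Hk: (d z) => [|k].
  by move/eqP: Hk; rewrite d0 (negbTE zx).
rewrite /= in_setU => /orP [/dist_le|]; first by lia.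
rewrite inE => /existsP [a /andP [Ha Hab]]; exists a; rewrite Hab /=.
have := dist_le Ha; have := dist_edge x Hab; rewrite Hk; lia.
Qed.

Definition par z := odflt z [pick y | e y z && ((d y).+1 == d z)].

Lemma par_spec z : z != x -> e (par z) z /\ (d (par z)).+1 = d z.
Proof.
move=> zx; rewrite /par; case: pickP => [y /andP [H1 /eqP H2] //|H].
by have [y] := par_ex zx; rewrite H.
Qed.

Lemma iter_par z k : k <= d z -> d (iter k par z) = d z - k.
Proof.
elim: k => [|k IH] H /=; first by rewrite subn0.
have H1 := IH (ltnW H).
have Hx : iter k par z != x by rewrite -d0 H1; lia.
have [_ H2] := par_spec Hx; lia.
Qed.

Lemma iter_edge z k : k < d z -> e (iter k.+1 par z) (iter k par z).
Proof.
move=> H; have H1 := iter_par (ltnW H).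
have Hx : iter k par z != x by rewrite -d0 H1; lia.
by have [H2 _] := par_spec Hx.
Qed.

Lemma iter_x z : iter (d z) par z = x.
Proof. by apply/eqP; rewrite -d0 iter_par // subnn. Qed.

Lemma iter_inj z m1 m2 : m1 <= d z -> m2 <= d z ->
  iter m1 par z = iter m2 par z -> m1 = m2.
Proof. move=> H1 H2 /(congr1 d); rewrite !iter_par //; lia. Qed.

Lemma two_par w z1 z2 : e w z1 -> e w z2 -> z1 != z2 ->
  d z1 <= d w -> d z2 <= d w -> False.
Proof.
move=> E1 E2 N12 D1 D2.
pose A k := iter k par z1; pose B k := iter k par z2.
pose inB v := [exists j : 'I_(d z2).+1, B j == v].
pose P k := (k <= d z1) && inB (A k).
have HP : exists k, P k.
  exists (d z1); rewrite /P leqnn /=; apply/existsP; exists ord_max.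
  by rewrite /A /B /= !iter_x.
have [i /andP [Hi1 /existsP [[j Hj] /= /eqP Hij]] Hmin] := ex_minnP HP.
rewrite ltnS in Hj.
have HA m1 m2 : m1 <= d z1 -> m2 <= d z1 -> A m1 = A m2 -> m1 = m2.
  exact: iter_inj.
have HB m1 m2 : m1 <= d z2 -> m2 <= d z2 -> B m1 = B m2 -> m1 = m2.
  exact: iter_inj.
have Hw1 m : m <= d z1 -> A m <> w.
  move=> Hm EA; case: m Hm EA => [|m] Hm EA.
    by move: E1; rewrite -EA /A /= irr.
  by move: (iter_par Hm); rewrite -/(A _) EA; lia.
have Hw2 m : m <= d z2 -> B m <> w.
  move=> Hm EB; case: m Hm EB => [|m] Hm EB.
    by move: E2; rewrite -EB /B /= irr.
  by move: (iter_par Hm); rewrite -/(B _) EB; lia.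
have HAB m m' : m < i -> m' <= j -> A m <> B m'.
  move=> Hm Hm' E; have : P m.
    rewrite /P; apply/andP; split; first by lia.
    have Hlt : m' < (d z2).+1 by lia.
    by apply/existsP; exists (Ordinal Hlt) => /=; rewrite E.
  by move/Hmin; lia.
pose h k := if k == 0 then w else if k <= i then A k.-1 else B (j + i.+1 - k).
have Hh0 : h 0 = w by [].
pose s := map h (iota 1 (i + j).+1).
have := ac (x := w) (s := s).
have -> : w :: s = map h (iota 0 (i + j).+2) by [].
rewrite map_inj_in_uniq ?iota_uniq; last first.
  move=> k1 k2; rewrite !mem_iota !add0n => R1 R2; rewrite /h.
  case: k1 R1 => [|k1] R1; case: k2 R2 => [|k2] R2 //=.
  - case: ifP => L2; first by move=> E; exfalso; apply: (Hw1 k2 _ (esym E)); lia.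
    by move=> E; exfalso; apply: (Hw2 (j + i.+1 - k2.+1) _ (esym E)); lia.
  - case: ifP => L1; first by move=> E; exfalso; apply: (Hw1 k1 _ E); lia.
    by move=> E; exfalso; apply: (Hw2 (j + i.+1 - k1.+1) _ E); lia.
  case: ifP => L1; case: ifP => L2.
  - move/HA; lia.
  - by move=> E; exfalso; apply: (HAB k1 (j + i.+1 - k2.+1) _ _ E); lia.
  - by move=> E; exfalso; apply: (HAB k2 (j + i.+1 - k1.+1) _ _ (esym E)); lia.
  - move/HB; lia.
move=> /(_ isT).
have Hs : path e w s.
  rewrite -Hh0 /s; apply: path_map_iota => k Hk; rewrite /h.
  case: (k =P 0) => K0.
    rewrite K0 /=; case: ifP => L; first by rewrite /A /=.
    have I0 : i = 0 by lia.
    by rewrite I0 addnK Hij I0 /A /=.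
  have -> : (k.+1 == 0) = false by [].
  case: ifP => L1; case: ifP => L2; try lia.
  - have -> : k = k.-1.+1 by lia.
    by rewrite se /A; apply: iter_edge; lia.
  - have -> : k = i by lia.
    have -> : j + i.+1 - i.+1 = j by lia.
    rewrite Hij se; have -> : i = i.-1.+1 by lia.
    apply: iter_edge; lia.
  - have -> : j + i.+1 - k = (j + i.+1 - k.+1).+1 by lia.
    apply: iter_edge; lia.
move=> /(_ Hs).
have Hsz : 2 <= size s.
  rewrite /s size_map size_iota.
  case: (i =P 0) => I0; case: (j =P 0) => J0; try lia.
  have : B j = A i by rewrite Hij.
  by rewrite I0 J0 /A /B /= => E; rewrite E eqxx in N12.
move=> /(_ Hsz).
rewrite -Hh0 /s last_map_iota add0n /h /=.
have -> : (i + j < i) = false by lia.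
by rewrite se (_ : j + i.+1 - (i + j).+1 = 0) /= ?E2 //; lia.
Qed.

End Tree.

Section Comp.
Variable T : finType.
Variable e : rel T.
Hypothesis irr : irreflexive e.
Hypothesis se : symmetric e.
Hypothesis ce : connected e.
Variable x : T.
Local Notation n := #|T|.
Local Notation d := (dist e).

Lemma del_sym : symmetric (del e x).
Proof.
move=> a b; rewrite /del /= se.
by case: (a != x); case: (b != x); rewrite ?andbF ?andbT.
Qed.

Lemma comp_sym v w : connect (del e x) v w = connect (del e x) w v.
Proof. exact: (sym_connect_sym del_sym). Qed.

Lemma comp_nx v w : v != x -> w \in component e x v -> w != x.
Proof.
move=> vx; rewrite inE => /connectP [s Hp ->].
elim/last_ind: s Hp => [|s a IH] //=.
rewrite rcons_path last_rcons => /andP [_]; by case/and3P.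
Qed.

Lemma comp_edge v w z : v != x -> w \in component e x v -> e w z -> z != x ->
  z \in component e x v.
Proof.
move=> vx Hw Hwz zx; have wx := comp_nx vx Hw.
move: Hw; rewrite !inE => Hw; apply: connect_trans Hw (connect1 _).
by rewrite /del /= Hwz wx zx.
Qed.

Lemma comp_same v w : w \in component e x v -> component e x w = component e x v.
Proof.
rewrite inE => Hw; apply/setP => z; rewrite !inE; apply/idP/idP => H.
- exact: connect_trans Hw H.
- by rewrite comp_sym in Hw; exact: connect_trans Hw H.
Qed.

Lemma comp_self v : v \in component e x v.
Proof. by rewrite inE connect0. Qed.

Lemma comp_out v w z : v != x -> w \in component e x v -> z \notin component e x v ->
  e w z -> z = x.
Proof.
move=> vx Hw Hz H; apply/eqP; apply/negPn/negP => zx; move: Hz.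
by rewrite (comp_edge vx Hw).
Qed.

Lemma cut_dist v c u : v != x -> c \in component e x v -> u \notin component e x v ->
  d c u = d c x + d x u.
Proof.
move=> vx Hc Hu; set C := component e x v in Hc Hu *.
apply/eqP; rewrite eqn_leq; apply/andP; split.
  by apply: dist_tri; exact: dist_lt.
pose f w := if w \in C then d c w else d c x + d x w.
have := lip_le (f := f) (u := c) (v := u) _ (dist_lt ce c u).
rewrite /f Hc (negbTE Hu) dist_self add0n; apply.
move=> a b Hab; rewrite /f.
case: (boolP (a \in C)) => Ha; case: (boolP (b \in C)) => Hb.
- exact: dist_edge.
- have bx := comp_out vx Ha Hb Hab; subst b.
  by rewrite dist_self addn0; exact: dist_edge Hab.
- rewrite se in Hab; have ax := comp_out vx Hb Ha Hab; subst a.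
  rewrite dist_self addn0; apply: dist_edge; by rewrite se.
- have := dist_edge x Hab; slia.
Qed.

Lemma leaf_nb l : leaf e l -> exists z, forall w, e l w = (w == z).
Proof.
rewrite /leaf /deg => /cards1P [z Hz]; exists z => w.
by rewrite -in_set1 -Hz inE.
Qed.

Lemma leaf_dist l b u : leaf e l -> e l b -> u != l -> d u l = (d u b).+1.
Proof.
move=> Hl Hlb ul; have [z Hz] := leaf_nb Hl.
have bz : b = z by apply/eqP; rewrite -Hz.
apply/eqP; rewrite eqn_leq; apply/andP; split.
  by apply: dist_edge; rewrite se.
pose f w := if w == l then (d u b).+1 else d u w.
have := lip_le (f := f) (u := u) (v := l) _ (dist_lt ce u l).
rewrite /f eqxx (negbTE ul) dist_self add0n; apply.
move=> a c Hac; rewrite /f.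
case: (a =P l) => Ha; case: (c =P l) => Hc.
- by subst; rewrite irr in Hac.
- subst a; have -> : c = b by rewrite bz; apply/eqP; rewrite -Hz.
  slia.
- subst c; have -> : a = b by rewrite bz; apply/eqP; rewrite -Hz se.
  by [].
- exact: dist_edge.
Qed.

Lemma one_broom_uniq C b b' : one_broom e C -> b \in C -> broom e b ->
  b' \in C -> broom e b' -> b' = b.
Proof.
rewrite /one_broom => /eqP /cards1P [z Hz] Hb Bb Hb' Bb'.
have : b \in [set b in C | broom e b] by rewrite inE Hb Bb.
have : b' \in [set b in C | broom e b] by rewrite inE Hb' Bb'.
by rewrite Hz !in_set1 => /eqP -> /eqP ->.
Qed.

Lemma leaf_nb_in v l z : v != x -> ~~ leaf e x -> one_broom e (component e x v) ->
  l \in component e x v -> leaf e l -> e l z ->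
  z \in component e x v /\ broom e z.
Proof.
move=> vx lx ob Hl Ll Hlz.
have [z' Hz'] := leaf_nb Ll.
have Bz : broom e z by apply/existsP; exists l; rewrite se Hlz Ll.
case: (z =P x) => zx; last first.
  by split => //; apply: (comp_edge vx Hl Hlz); apply/eqP.
exfalso; subst z.
have Hsing w : connect (del e x) l w -> w = l.
  case/connectP => s; case: s => [|a s] /=; first by move=> _ ->.
  move=> /andP [H _] _; move: H; rewrite /del /= => /and3P [Ha _ ax].
  have E1 := Hz' a; have E2 := Hz' x.
  rewrite Ha in E1; rewrite Hlz in E2.
  by move: ax; rewrite (eqP (esym E1)) (eqP (esym E2)) eqxx.
move: ob; rewrite -(comp_same Hl) /one_broom => /eqP/cards1P [b Hb].
have : b \in [set b in component e x l | broom e b] by rewrite Hb in_set1.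
rewrite !inE => /andP [/Hsing -> /existsP [y /andP [Hy Ly]]].
have yx : y = x.
  have E1 := Hz' y; have E2 := Hz' x; rewrite Hy in E1; rewrite Hlz in E2.
  by rewrite (eqP (esym E1)) (eqP (esym E2)).
by subst y; rewrite Ly in lx.
Qed.


Lemma two_nb_nonleaf w a c : e w a -> e w c -> a != c -> ~~ leaf e w.
Proof.
move=> Ha Hc ac; apply/negP => Lw; have [z Hz] := leaf_nb Lw.
by move: ac; rewrite Hz in Ha; rewrite Hz in Hc; rewrite (eqP Ha) (eqP Hc) eqxx.
Qed.

Lemma nonleaf_other w p : e w p -> ~~ leaf e w -> exists z, e w z && (z != p).
Proof.
move=> Hp Lw.
have : ~~ ([set y | e w y] \subset [set p]).
  apply/negP => Hs; move: Lw; rewrite /leaf /deg.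
  have := subset_leq_card Hs; rewrite cards1.
  have : 0 < #|[set y | e w y]| by apply/card_gt0P; exists p; rewrite inE.
  slia.
case/subsetPn => z; rewrite !inE => H1 H2; exists z; by rewrite H1 H2.
Qed.

End Comp.

Section Broom.
Variable T : finType.
Variable e : rel T.
Hypothesis irr : irreflexive e.
Hypothesis se : symmetric e.
Hypothesis ce : connected e.
Hypothesis ac : acyclic e.
Variable x v0 y b : T.
Hypothesis lx : ~~ leaf e x.
Hypothesis v0x : v0 != x.
Local Notation C := (component e x v0).
Hypothesis ob : one_broom e C.
Hypothesis yL : y \in leaves e C.
Hypothesis yb : e y b.
Local Notation n := #|T|.
Local Notation d := (dist e).
Local Notation L := (leaves e C).

Lemma yC : y \in C /\ leaf e y.
Proof. by move: yL; rewrite inE => /andP. Qed.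

Lemma b_in : b \in C /\ broom e b.
Proof. have [H1 H2] := yC; exact: leaf_nb_in v0x lx ob H1 H2 yb. Qed.

Lemma bx : b != x.
Proof. exact: comp_nx v0x (proj1 b_in). Qed.

Local Notation q := (d x b).
Local Notation pv k := (iter k (par e x) b).

Lemma q_pos : 0 < q.
Proof. by rewrite lt0n (@d0 _ e x) // bx. Qed.

Lemma pv_depth k : k <= q -> d x (pv k) = q - k.
Proof. exact: (iter_par ce). Qed.

Lemma pv_nx k : k < q -> pv k != x.
Proof. by move=> H; rewrite -(@d0 _ e x) // pv_depth ?(ltnW H) //; slia. Qed.

Lemma pv_in k : k < q -> pv k \in C.
Proof.
elim: k => [|k IH] H; first exact: (proj1 b_in).
apply: (comp_edge v0x (IH (ltnW H))); last exact: pv_nx.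
by rewrite se; apply: (iter_edge ce); slia.
Qed.

Lemma leaf_C_nb l : l \in L -> e l b.
Proof.
rewrite inE => /andP [Hl Ll]; have [z Hz] := leaf_nb Ll.
have Hlz : e l z by rewrite Hz.
have [Hz1 Hz2] := leaf_nb_in se v0x lx ob Hl Ll Hlz.
have [Hb1 Hb2] := b_in.
by rewrite -(one_broom_uniq ob Hb1 Hb2 Hz1 Hz2).
Qed.

Lemma leafC l : l \in L -> l \in C /\ leaf e l.
Proof. by rewrite inE => /andP. Qed.

Lemma leaf_depth l : l \in L -> d x l = q.+1.
Proof.
move=> Hl; have [H1 H2] := leafC Hl.
apply: (leaf_dist irr se ce) => //; first exact: leaf_C_nb.
by rewrite eq_sym; apply: comp_nx H1.
Qed.

Lemma pv_nonleaf k : k < q -> ~~ leaf e (pv k).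
Proof.
move=> H.
have E1 : e (pv k) (pv k.+1).
  rewrite se; apply: (iter_edge ce) => //.
have D1 : d x (pv k.+1) = q - k.+1 by apply: pv_depth.
case: k H E1 D1 => [|k] H E1 D1.
  apply: (two_nb_nonleaf E1 (c := y)); first by rewrite /= se.
  apply/negP => /eqP E; have := leaf_depth yL; rewrite -E D1; slia.
apply: (two_nb_nonleaf E1 (c := pv k)).
  by apply: (iter_edge ce); slia.
apply/negP => /eqP E; have := pv_depth (k := k); rewrite -E D1; slia.
Qed.

Lemma nonleaf_pv w : w \in C -> ~~ leaf e w -> exists2 k, k < q & w = pv k.
Proof.
move=> Hw Lw.
suff : forall m w, n - d x w <= m -> w \in C -> ~~ leaf e w ->
    (forall k, k < q -> w != pv k) -> False.
  move=> H; case: (boolP [exists k : 'I_q, w == pv k]).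
    by case/existsP => k /eqP ->; exists k.
  move=> /existsPn Hn; exfalso; apply: (H n w (leq_subr _ _) Hw Lw) => k Hk.
  exact: (Hn (Ordinal Hk)).
elim => [|m IH] {}w Hm {}Hw {}Lw Hn.
  by have := dist_lt ce x w; slia.
have wx := comp_nx v0x Hw.
have [Ep Dp] := par_spec ce wx.
have Ep' : e w (par e x w) by rewrite se.
have [z /andP [Ez zp]] := nonleaf_other Ep' Lw.
have Dz : d x z = (d x w).+1.
  have := dist_edge x Ez; case: (ltngtP (d x z) (d x w).+1) => // H _.
  exfalso; apply: (two_par irr se ce ac (x := x) (w := w) (z1 := par e x w) (z2 := z)).
  - by rewrite se.
  - exact: Ez.
  - by rewrite eq_sym.
  - slia.
  - slia.
have zx : z != x by rewrite -(@d0 _ e x) // Dz.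
have Hz : z \in C by apply: (comp_edge v0x Hw Ez zx).
have Hnz k : k < q -> z != pv k.
  move=> Hk; apply/negP => /eqP Ez'.
  have Dk : d x z = q - k by rewrite Ez' pv_depth // ltnW.
  case: (ltnP k.+1 q) => Hk1.
  - apply: (two_par irr se ce ac (x := x) (w := z) (z1 := w) (z2 := pv k.+1)).
    + by rewrite se.
    + by rewrite Ez' se; apply: (iter_edge ce); slia.
    + exact: Hn.
    + slia.
    + rewrite pv_depth; slia.
  - have : d x w = 0 by slia.
    by move/eqP; rewrite (@d0 _ e x) // (negbTE wx).
case: (boolP (leaf e z)) => Lz.
  have Bw : broom e w by apply/existsP; exists z; rewrite Ez Lz.
  have [Hb1 Hb2] := b_in.
  have := one_broom_uniq ob Hb1 Hb2 Hw Bw.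
  by move/eqP; rewrite (negbTE (Hn 0 q_pos)).
apply: (IH z) => //.
have := dist_lt ce x z; slia.
Qed.


Lemma pv_edge j : j < q -> e (pv j) (pv j.+1).
Proof. by move=> H; rewrite se; apply: (iter_edge ce). Qed.

Lemma dx_lip a c : e a c -> d x a <= (d x c).+1.
Proof. by move=> H; apply: dist_edge; rewrite se. Qed.

Lemma pv_le_dist k1 m : k1 + m <= q -> d (pv k1) (pv (k1 + m)) <= m.
Proof.
elim: m => [|m IH] H; first by rewrite addn0 dist_self.
have H' : k1 + m < q by rewrite addnS in H.
have := IH (ltnW H').
have := dist_edge (pv k1) (pv_edge H'); rewrite addnS; slia.
Qed.

Lemma pv_dist k1 k2 : k1 <= k2 -> k2 <= q -> d (pv k1) (pv k2) = k2 - k1.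
Proof.
move=> H1 H2; apply/eqP; rewrite eqn_leq; apply/andP; split.
  by have := pv_le_dist (k1 := k1) (m := k2 - k1); rewrite subnKC //; apply.
have := lip_ge (f := d x) (u := pv k1) (v := pv k2) dx_lip (dist_lt ce _ _).
rewrite !pv_depth //; [slia | slia].
Qed.

Lemma pv_distA k1 k2 : k1 <= q -> k2 <= q -> d (pv k1) (pv k2) = (k1 - k2) + (k2 - k1).
Proof.
move=> H1 H2; case: (leqP k1 k2) => H.
  rewrite pv_dist //; slia.
rewrite (dist_sym se ce) pv_dist //; slia.
Qed.

Lemma pv_neq_leaf k l : k < q -> l \in L -> pv k != l.
Proof.
move=> Hk Hl; apply/negP => /eqP E; have := pv_nonleaf Hk.
by rewrite E (proj2 (leafC Hl)).
Qed.

Lemma pv_leaf k l : k < q -> l \in L -> d (pv k) l = k.+1.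
Proof.
move=> Hk Hl; rewrite (leaf_dist irr se ce (proj2 (leafC Hl)) (leaf_C_nb Hl)).
  by rewrite (pv_distA (k1 := k) (k2 := 0)) //; slia.
exact: pv_neq_leaf.
Qed.

Lemma leaf_pv k l : k < q -> l \in L -> d l (pv k) = k.+1.
Proof. by move=> Hk Hl; rewrite (dist_sym se ce) pv_leaf. Qed.

Lemma leaf_leaf l l' : l \in L -> l' \in L -> l != l' -> d l l' = 2.
Proof.
move=> Hl Hl' N; rewrite (leaf_dist irr se ce (proj2 (leafC Hl')) (leaf_C_nb Hl')) //.
by rewrite (dist_sym se ce) (pv_leaf (k := 0)) // q_pos.
Qed.

Local Notation P := ((fun k : 'I_q => pv k) @: [set: 'I_q]).

Lemma C_split : C = P :|: L.
Proof.
apply/setP => w; rewrite in_setU; apply/idP/idP.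
- move=> Hw; case: (boolP (leaf e w)) => Lw.
    by rewrite [w \in L]inE Hw Lw orbT.
  have [k Hk ->] := nonleaf_pv Hw Lw.
  by apply/orP; left; apply/imsetP; exists (Ordinal Hk).
- case/orP => [/imsetP [k _ ->] | /leafC [] //]; exact: pv_in (ltn_ord k).
Qed.

Lemma P_L_disj : [disjoint P & L].
Proof.
rewrite disjoint_subset; apply/subsetP => w /imsetP [k _ ->].
by rewrite !inE negb_and pv_nonleaf ?orbT.
Qed.

Lemma sum_C F : \sum_(w in C) F w = \sum_(k < q) F (pv k) + \sum_(l in L) F l.
Proof.
have HC := C_split.
rewrite (eq_bigl [predU P & L]); last by move=> w; rewrite /= {1}HC in_setU.
rewrite bigU ?P_L_disj // big_imset /=.
  by congr (_ + _); apply: eq_bigl => k; rewrite in_setT.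
move=> k1 k2 _ _ /= E; apply: val_inj; apply: (iter_inj ce) E.
- by have := ltn_ord k1; slia.
- by have := ltn_ord k2; slia.
Qed.

Lemma sum_ord1 m : \sum_(k < m) 1 = m.
Proof. by elim: m => [|m IH]; rewrite ?big_ord0 // big_ord_recr IH /=; slia. Qed.

Lemma card_C : #|C| = q + #|L|.
Proof. by rewrite -sum1_card sum_C sum1_card sum_ord1. Qed.

Lemma sum_dx : \sum_(w in C) d x w = \sum_(k < q) (q - k) + #|L| * q.+1.
Proof.
rewrite sum_C; congr (_ + _).
  by apply: eq_bigr => k _; rewrite pv_depth // ltnW.
by rewrite (eq_bigr (fun _ => q.+1)) ?sum_nat_const // => l Hl; rewrite leaf_depth.
Qed.

Lemma sum_db : \sum_(w in C) d b w = \sum_(k < q) k + #|L|.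
Proof.
rewrite sum_C; congr (_ + _).
  apply: eq_bigr => k _; rewrite (pv_distA (k1 := 0) (k2 := k)) //; first slia.
  exact: ltnW.
rewrite (eq_bigr (fun _ => 1)) ?sum1_card // => l Hl.
by rewrite (pv_leaf (k := 0)) // q_pos.
Qed.

Lemma sum_LL l : l \in L -> \sum_(l' in L) d l l' = 2 * #|L|.-1.
Proof.
move=> Hl; rewrite (bigD1 l) //= dist_self add0n.
transitivity (\sum_(i in [predD1 L & l]) 2).
  apply: eq_big => i; first by rewrite !inE andbC.
  by move=> /andP [H1 H2]; rewrite leaf_leaf // eq_sym.
by rewrite sum_nat_const (cardD1 l L) Hl /= mulnC.
Qed.

Lemma sum_dd : \sum_(w in C) \sum_(w' in C) d w w' =
  \sum_(k < q) \sum_(k' < q) ((k - k') + (k' - k)) + 2 * (#|L| * \sum_(k < q) k.+1)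
  + #|L| * (2 * #|L|.-1).
Proof.
rewrite sum_C.
rewrite (eq_bigr (fun k : 'I_q => \sum_(k' < q) ((k - k') + (k' - k)) + #|L| * k.+1)); last first.
  move=> k _; rewrite sum_C; congr (_ + _).
    apply: eq_bigr => k' _; rewrite pv_distA //; exact: ltnW.
  by rewrite (eq_bigr (fun _ => k.+1)) ?sum_nat_const // => l Hl; rewrite pv_leaf.
rewrite (eq_bigr (fun _ => \sum_(k < q) k.+1 + 2 * #|L|.-1) (P := mem L)); last first.
  move=> l Hl; rewrite sum_C sum_LL //; congr (_ + _).
  by apply: eq_bigr => k _; rewrite leaf_pv.
rewrite big_split /= sum_nat_const -big_distrr /=.
slia.
Qed.

End Broom.

Section Move.
Variable T : finType.
Variable e : rel T.
Hypothesis irr : irreflexive e.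
Hypothesis se : symmetric e.
Hypothesis ce : connected e.
Variables (A : {set T}) (x b1 : T).
Hypothesis b1A : b1 \notin A.
Hypothesis out : forall a z, a \in A -> z \notin A -> e a z -> z = x.
Local Notation e' := (move_tree e A b1).
Local Notation d := (dist e).
Local Notation d' := (dist e').
Local Notation n := #|T|.

Lemma mt_nn a c : a \notin A -> c \notin A -> e' a c = e a c.
Proof. by move=> Ha Hc; rewrite /move_tree /= (negbTE Ha) (negbTE Hc). Qed.

Lemma mt_in a c : a \in A -> e' a c = (c == b1).
Proof. by move=> Ha; rewrite /move_tree /= Ha. Qed.

Lemma mt_ni a c : a \notin A -> c \in A -> e' a c = (a == b1).
Proof. by move=> Ha Hc; rewrite /move_tree /= (negbTE Ha) Hc. Qed.

Lemma se' : symmetric e'.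
Proof.
move=> a c; case: (boolP (a \in A)) => Ha; case: (boolP (c \in A)) => Hc.
- rewrite !mt_in //.
  have -> : (c == b1) = false by apply/eqP => E; move: b1A; rewrite -E Hc.
  by have -> : (a == b1) = false by apply/eqP => E; move: b1A; rewrite -E Ha.
- by rewrite mt_in // mt_ni.
- by rewrite mt_ni // mt_in.
- by rewrite !mt_nn // se.
Qed.

Lemma F1_le u v : u \notin A -> v \notin A -> d' u v <= d u v.
Proof.
move=> Hu Hv.
pose g w := if w \in A then (d' u x).+1 else d' u w.
have := lip_le (f := g) (u := u) (v := v) _ (dist_lt ce u v).
rewrite /g (negbTE Hu) (negbTE Hv) dist_self add0n; apply.
move=> a c Hac; rewrite /g.
case: (boolP (a \in A)) => Ha; case: (boolP (c \in A)) => Hc.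
- by [].
- by rewrite (out Ha Hc Hac); slia.
- by rewrite se in Hac; rewrite (out Hc Ha Hac).
- by apply: dist_edge; rewrite mt_nn.
Qed.

Lemma F1 u v : u \notin A -> v \notin A -> d' u v = d u v.
Proof.
move=> Hu Hv; apply/eqP; rewrite eqn_leq F1_le //=.
pose f w := if w \in A then (d u b1).+1 else d u w.
have := lip_le (e := e') (f := f) (u := u) (v := v) _
  (leq_ltn_trans (F1_le Hu Hv) (dist_lt ce u v)).
rewrite /f (negbTE Hu) (negbTE Hv) dist_self add0n; apply.
move=> a c Hac; rewrite /f.
case: (boolP (a \in A)) => Ha; case: (boolP (c \in A)) => Hc.
- by move: Hac; rewrite mt_in // => /eqP E; move: b1A; rewrite -E Hc.
- by move: Hac; rewrite mt_in // => /eqP ->; slia.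
- by move: Hac; rewrite mt_ni // => /eqP ->.
- by apply: dist_edge; rewrite -mt_nn.
Qed.

Lemma b1_conn w : connect e' b1 w.
Proof.
case: (boolP (w \in A)) => Hw.
  by apply: connect1; rewrite mt_ni // eqxx.
have : d' b1 w < n by rewrite F1 //; apply: dist_lt.
by move/dist_ball/ball_connect.
Qed.

Lemma ce' : connected e'.
Proof.
move=> u v; apply: connect_trans (b1_conn v).
by rewrite (sym_connect_sym se'); apply: b1_conn.
Qed.

Lemma F2 c v : c \in A -> v \notin A -> d' c v = (d b1 v).+1.
Proof.
move=> Hc Hv; apply/eqP; rewrite eqn_leq; apply/andP; split.
  apply: leq_trans (dist_tri _ (dist_lt ce' b1 v)) _.
  have Ecb : e' c b1 by rewrite mt_in // eqxx.
  rewrite (F1 b1A Hv); have := dist_edge c Ecb; rewrite dist_self; slia.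
pose f w := if w == c then 0 else if w \in A then 2 else (d b1 w).+1.
have cb1 : (b1 == c) = false by apply/eqP => E; move: b1A; rewrite E Hc.
have := lip_le (e := e') (f := f) (u := c) (v := v) _ (dist_lt ce' c v).
rewrite /f eqxx (_ : (v == c) = false) ?(negbTE Hv) ?add0n; first apply.
  move=> a z Haz; rewrite /f.
  case: (boolP (a \in A)) => Ha.
    move: Haz; rewrite mt_in // => /eqP ->; rewrite cb1 (negbTE b1A) dist_self.
    by case: (a == c).
  case: (boolP (z \in A)) => Hz.
    move: Haz; rewrite mt_ni // => /eqP ->; rewrite cb1 dist_self.
    by case: (z == c).
  have -> : (z == c) = false by apply/eqP => E; rewrite E Hc in Hz.
  have -> : (a == c) = false by apply/eqP => E; rewrite E Hc in Ha.
  by rewrite ltnS; apply: dist_edge; rewrite -mt_nn.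
by apply/eqP => E; rewrite E Hc in Hv.
Qed.

Lemma F3 c c' : c \in A -> c' \in A -> c != c' -> d' c c' = 2.
Proof.
move=> Hc Hc' N; apply/eqP; rewrite eqn_leq; apply/andP; split.
  have Ecb : e' c b1 by rewrite mt_in // eqxx.
  have Ebc : e' b1 c' by rewrite mt_ni // eqxx.
  have := dist_edge c Ebc; have := dist_edge c Ecb; rewrite dist_self; slia.
pose f w := if w == c then 0 else if w == c' then 2 else 1.
have := lip_le (e := e') (f := f) (u := c) (v := c') _ (dist_lt ce' c c').
rewrite /f eqxx eq_sym (negbTE N) eqxx add0n; apply.
have cb1 : (b1 == c) = false by apply/eqP => E; move: b1A; rewrite E Hc.
have cb1' : (b1 == c') = false by apply/eqP => E; move: b1A; rewrite E Hc'.
move=> a z Haz; rewrite /f.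
case: (boolP (a \in A)) => Ha.
  move: Haz; rewrite mt_in // => /eqP ->; rewrite cb1 cb1'.
  by case: (a == c); case: (a == c').
case: (boolP (z \in A)) => Hz.
  move: Haz; rewrite mt_ni // => /eqP ->; rewrite cb1 cb1'.
  by case: (z == c); case: (z == c').
have -> : (z == c) = false by apply/eqP => E; rewrite E Hc in Hz.
have -> : (z == c') = false by apply/eqP => E; rewrite E Hc' in Hz.
by case: (a == c); case: (a == c').
Qed.

End Move.

Section Wsplit.
Variable T : finType.

Lemma split_sum (A : {set T}) (F : T -> nat) :
  \sum_u F u = \sum_(u in A) F u + \sum_(u in ~: A) F u.
Proof.
rewrite (bigID (mem A)) /=; congr (_ + _); apply: eq_bigl => u; by rewrite ?inE.
Qed.

Lemma S_split (e : rel T) (se : symmetric e) (ce : connected e) (A : {set T}) :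
  \sum_u \sum_v dist e u v =
  \sum_(u in A) \sum_(v in A) dist e u v + 2 * \sum_(u in A) \sum_(v in ~: A) dist e u v
  + \sum_(u in ~: A) \sum_(v in ~: A) dist e u v.
Proof.
rewrite (split_sum A).
rewrite (eq_bigr (fun u => \sum_(v in A) dist e u v + \sum_(v in ~: A) dist e u v));
  last by move=> u _; rewrite (split_sum A).
rewrite [X in _ + X](eq_bigr (fun u => \sum_(v in A) dist e u v + \sum_(v in ~: A) dist e u v));
  last by move=> u _; rewrite (split_sum A).
rewrite !big_split /=.
rewrite [X in _ + (X + _)]exchange_big /=.
rewrite [X in _ + (X + _)](eq_bigr (fun u => \sum_(v in ~: A) dist e u v)); last first.
  by move=> u _; apply: eq_bigr => v _; rewrite (dist_sym se ce).
slia.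
Qed.

End Wsplit.

Lemma sum_k q : 2 * \sum_(k < q) k + q = q * q.
Proof.
elim: q => [|q IH]; first by rewrite big_ord0.
rewrite big_ord_recr /=; set S := \sum_(k < q) k in IH *; nia.
Qed.

Lemma sum_T c m : m <= c.+1 -> 2 * \sum_(k < m) (c - k) + m * m = m * (2 * c + 1).
Proof.
elim: m => [|m IH] H; first by rewrite big_ord0.
rewrite big_ord_recr /=; have := IH (ltnW H).
set S := \sum_(k < m) (c - k); nia.
Qed.

Lemma sum_kS q : \sum_(k < q) k.+1 = \sum_(k < q) k + q.
Proof.
elim: q => [|q IH]; first by rewrite !big_ord0.
rewrite !big_ord_recr /= IH; set S := \sum_(k < q) k; lia.
Qed.

Lemma sum_A2 q : 6 * \sum_(k < q) \sum_(k' < q) (k - k') + q = q * q * q.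
Proof.
elim: q => [|q IH]; first by rewrite big_ord0.
rewrite big_ord_recr /=.
rewrite (eq_bigr (fun k : 'I_q => \sum_(k' < q) (k - k'))); last first.
  move=> k _; rewrite big_ord_recr /=.
  have -> : k - q = 0 by apply/eqP; rewrite subn_eq0; apply: ltnW.
  by rewrite addn0.
have := sum_T (c := q) (m := q.+1) (leqnn _).
set S := \sum_(k < q) \sum_(k' < q) (k - k') in IH *.
set S2 := \sum_(k < q.+1) (q - k); nia.
Qed.

Lemma sum_sym q : \sum_(k < q) \sum_(k' < q) ((k - k') + (k' - k)) =
  2 * \sum_(k < q) \sum_(k' < q) (k - k').
Proof.
rewrite (eq_bigr (fun k : 'I_q => \sum_(k' < q) (k - k') + \sum_(k' < q) (k' - k)));
  last by move=> k _; rewrite big_split.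
rewrite big_split /= [X in _ + X]exchange_big /=.
set S := \sum_(k < q) \sum_(k' < q) (k - k'); lia.
Qed.

Section Help.
Variable T : finType.

Lemma sum_succ (A : {set T}) (F : T -> nat) :
  \sum_(v in A) (F v).+1 = \sum_(v in A) F v + #|A|.
Proof.
rewrite -sum1_card -big_split /=; apply: eq_bigr => v _; by rewrite addn1.
Qed.

Lemma split2 (A B : {set T}) (F : T -> nat) : (forall w, w \in B -> w \notin A) ->
  \sum_(v in ~: A) F v = \sum_(v in B) F v + \sum_(v in ~: A :&: ~: B) F v.
Proof.
move=> H; rewrite (bigID (mem B)) /=; congr (_ + _); apply: eq_bigl => v; rewrite !inE.
  by case Hb: (v \in B); rewrite ?andbF ?andbT //; apply: H.
by [].
Qed.

End Help.
Local Open Scope ring_scope.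

Lemma final_alg (R : rcfType) (q u r XR s0 sT A2 : nat) :
  (0 < q)%N ->
  (2 * s0 + q = q * q)%N -> (2 * sT = q * q + q)%N -> (6 * A2 + q = q * q * q)%N ->
  (((q + (u + 1)) * (q + u) + (q + (u + 1)) * ((s0 + (u + 2)) + r * q + XR + (q + (u + 2) + r))
   <= (q + (u + 2) + r) * (sT + (u + 1) * (q + 1)) + (q + (u + 1)) * ((sT + (u + 2) * (q + 1)) + XR)
      + (A2 + (u + 1) * (s0 + q) + (u + 1) * u))%N <->
   Num.sqrt ((((q + 1)%:R : R) * (3 * ((q + (u + 1)) + (q + (u + 2) + r))%:R
        + 2 * (q + 1)%:R - 7) + 3) / 12) - (q + 1)%:R + 3 / 2 <= (u + 2)%:R).
Proof.
move=> qpos H1 H2 H3.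
have H1' : 2%:R * (s0%:R : R) + q%:R = q%:R * q%:R.
  by have := congr1 (GRing.natmul (1 : R)) H1; rewrite !natrD !natrM => H; lra.
have H2' : 2%:R * (sT%:R : R) = q%:R * q%:R + q%:R.
  by have := congr1 (GRing.natmul (1 : R)) H2; rewrite !natrD !natrM => H; lra.
have H3' : 6%:R * (A2%:R : R) + q%:R = q%:R * q%:R * q%:R.
  by have := congr1 (GRing.natmul (1 : R)) H3; rewrite !natrD !natrM => H; lra.
have Es0 : (s0%:R : R) = (q%:R * q%:R - q%:R) / 2 by rewrite -H1'; field.
have EsT : (sT%:R : R) = (q%:R * q%:R + q%:R) / 2 by rewrite -H2'; field.
have EA2 : (A2%:R : R) = (q%:R * q%:R * q%:R - q%:R) / 6 by rewrite -H3'; field.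
have qR : (0 : R) < q%:R by rewrite ltr0n.
rewrite -(ler_nat R) !(natrD, natrM) Es0 EsT EA2.
set Q := (q%:R : R); set U := (u%:R : R); set Rr := (r%:R : R); set X := (XR%:R : R).
set al := (_ / 12).
pose be := U + 2 + (Q + 1) - 3 / 2.
have U0 : 0 <= U by rewrite ler0n.
have be0 : 0 <= be by rewrite /be; lra.
have Hs : (Num.sqrt al <= be) = (al <= be ^+ 2).
  by rewrite -{1}(ger0_norm be0) -sqrtr_sqr ler_sqrt // sqr_ge0.
rewrite -subr_ge0.
set lhs := (X in 0 <= X).
have -> : lhs = 2 * Q * (be ^+ 2 - al) by rewrite /lhs /be /al; field.
split => H.
  have : al <= be ^+ 2 by nra.
  by rewrite -Hs /be => ?; lra.
have : Num.sqrt al <= be by rewrite /be; lra.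
rewrite Hs => ?; nra.
Qed.

End Aux.
Import Aux.

Local Open Scope ring_scope.

Theorem mainTheorem7 (R : rcfType) (T : finType) (e : rel T)
    (x y1 y2 y1' : T) (C1 C2 : {set T}) :
  max_wiener e ->
  special e x ->
  is_component e x C1 -> is_component e x C2 -> C1 != C2 ->
  one_broom e C1 -> one_broom e C2 ->
  (forall y y', y \in leaves e C1 -> y' \in leaves e C2 ->
     (dist e y y' < diameter e)%N) ->
  y1 \in leaves e C1 -> y2 \in leaves e C2 ->
  e y1 y1' ->
  dist e x y1 = dist e x y2 ->
  #|leaves e C1| = (#|leaves e C2|).+1 ->
  ((wiener (move_tree e C2 y1') <= wiener e)%N <->
   Num.sqrt (((dist e x y1)%:R * (3 * (#|T|)%:R + 2 * (dist e x y1)%:R - 7) + 3) / 12)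
     - (dist e x y1)%:R + 3 / 2 <= (#|leaves e C1|)%:R :> R).
Proof.
move=> [[[irr se] ce ac] _] [Hdeg _] [v1 v1x HC1] [v2 v2x HC2] N12 ob1 ob2 _ y1L y2L Ey1 Hp Ht.
subst C1 C2.
have lx : ~~ leaf e x by rewrite /leaf; apply/negP => /eqP H; rewrite H in Hdeg.
have [b2 Eb2] : exists b2, e y2 b2.
  move: y2L; rewrite inE => /andP [_ /leaf_nb [z Hz]]; exists z; by rewrite Hz.
have Dy1 := leaf_depth irr se ce lx v1x ob1 y1L Ey1 y1L.
have Dy2 := leaf_depth irr se ce lx v2x ob2 y2L Eb2 y2L.
have Hq : dist e x b2 = dist e x y1' by move: Hp; rewrite Dy1 Dy2 => -[->].
have [b1C _] := b_in se lx v1x ob1 y1L Ey1.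
have disj w : w \in component e x v1 -> w \in component e x v2 -> False.
  by move=> H1 H2; move: N12; rewrite -(comp_same se H1) -(comp_same se H2) eqxx.
have b1n : y1' \notin component e x v2 by apply/negP => H; exact: disj _ b1C H.
have out2 a z : a \in component e x v2 -> z \notin component e x v2 -> e a z -> z = x.
  exact: comp_out v2x.
have cardC1 := card_C irr se ce ac lx v1x ob1 y1L Ey1.
have cardC2 := card_C irr se ce ac lx v2x ob2 y2L Eb2.
have sdx1 := sum_dx irr se ce ac lx v1x ob1 y1L Ey1.
have sdx2 := sum_dx irr se ce ac lx v2x ob2 y2L Eb2.
have sdb1 := sum_db irr se ce ac lx v1x ob1 y1L Ey1.
have sdd2 := sum_dd irr se ce ac lx v2x ob2 y2L Eb2.
have qpos := q_pos se lx v1x ob1 y1L Ey1.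
rewrite Hq in cardC2 sdx2 sdd2.
rewrite sum_sym in sdd2.
have hk := sum_k (dist e x y1').
have hT := sum_T (c := dist e x y1') (m := dist e x y1') (leqnSn _).
have hS := sum_kS (dist e x y1').
have hA := sum_A2 (dist e x y1').
pose C2s := component e x v2.
have se2 := se' se b1n.
have ce2 := ce' se ce b1n out2.
have hSe := S_split se ce (component e x v2).
have hSe' := S_split se2 ce2 (component e x v2).
have hK : (\sum_(u in ~: component e x v2) \sum_(v in ~: component e x v2)
            dist (move_tree e (component e x v2) y1') u v =
          \sum_(u in ~: component e x v2) \sum_(v in ~: component e x v2) dist e u v)%N.
  apply: eq_bigr => u Hu; apply: eq_bigr => v Hv.
  by apply: (F1 se ce y1' out2); rewrite -in_setC.
have hAA : (\sum_(u in component e x v2) \sum_(v in component e x v2)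
            dist (move_tree e (component e x v2) y1') u v =
          #|component e x v2| * (2 * #|component e x v2|.-1))%N.
  rewrite -sum_nat_const; apply: eq_bigr => c Hc.
  rewrite (bigD1 c) //= dist_self add0n.
  transitivity (\sum_(i in [predD1 component e x v2 & c]) 2)%N.
    apply: eq_big => i; first by rewrite !inE andbC.
    move=> /andP [H1 H2]; apply: (F3 se ce b1n out2) => //.
    by rewrite eq_sym.
  by rewrite sum_nat_const (cardD1 c (component e x v2)) Hc /= mulnC.
have hZ' : (\sum_(u in component e x v2) \sum_(v in ~: component e x v2)
            dist (move_tree e (component e x v2) y1') u v =
          #|component e x v2| * (\sum_(v in ~: component e x v2) dist e y1' v
             + #|~: component e x v2|))%N.
  rewrite -sum_nat_const; apply: eq_bigr => c Hc.
  rewrite -sum_succ; apply: eq_bigr => v Hv.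
  by apply: (F2 se ce b1n out2) => //; rewrite -in_setC.
have hZ : (\sum_(u in component e x v2) \sum_(v in ~: component e x v2) dist e u v =
          #|~: component e x v2| * \sum_(w in component e x v2) dist e x w
          + #|component e x v2| * \sum_(v in ~: component e x v2) dist e x v)%N.
  rewrite big_distrr -sum_nat_const -big_split /=; apply: eq_bigr => c Hc.
  rewrite -sum_nat_const -big_split /=; apply: eq_bigr => v Hv.
  by rewrite (cut_dist se ce v2x Hc) -?in_setC // (dist_sym se ce c x).
pose R2 := ~: component e x v2 :&: ~: component e x v1.
have sub12 w : (w \in component e x v1 -> w \notin component e x v2)%N.
  by move=> H; apply/negP => H'; exact: disj _ H H'.
have hXN := split2 (dist e x) sub12.
have hYN := split2 (dist e y1') sub12.
have hN := split2 (fun _ => 1) sub12.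
rewrite !sum1_card in hN.
have hYR : (\sum_(v in R2) dist e y1' v = #|R2| * dist e x y1' + \sum_(v in R2) dist e x v)%N.
  rewrite -sum_nat_const -big_split /=; apply: eq_bigr => w0.
  rewrite /R2 in_setI => /andP [_]; rewrite in_setC => Hw0.
  by rewrite (cut_dist se ce v1x b1C Hw0) (dist_sym se ce y1' x).
rewrite -/R2 in hXN hYN hN.
have hn := cardsC (component e x v2).
have [u Hu] : exists u, (#|leaves e (component e x v2)| = u.+1)%N.
  have : (0 < #|leaves e (component e x v2)|)%N by apply/card_gt0P; exists y2.
  by case: #|leaves e (component e x v2)| => [|u] // _; exists u.
rewrite Hu in cardC2 sdx2 sdd2 Ht.
rewrite Ht in cardC1 sdx1 sdb1.
set q := dist e x y1' in qpos Dy1 cardC1 cardC2 sdx1 sdx2 sdb1 sdd2 hk hT hS hA hYR.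
set s0 := (\sum_(k < q) k)%N in sdb1 hk hS.
set sT := (\sum_(k < q) (q - k))%N in sdx1 sdx2 hT.
set sS := (\sum_(k < q) k.+1)%N in sdd2 hS.
set A2 := (\sum_(k < q) \sum_(k' < q) (k - k'))%N in sdd2 hA.
set r := #|R2| in hN hYR.
set XR := (\sum_(v in R2) dist e x v)%N in hXN hYR.
set K := (\sum_(u in ~: component e x v2) \sum_(v in ~: component e x v2) dist e u v)%N in hSe hK.
set AA := (\sum_(u in component e x v2) \sum_(v in component e x v2) dist e u v)%N in hSe sdd2.
set Z := (\sum_(u in component e x v2) \sum_(v in ~: component e x v2) dist e u v)%N in hSe hZ.
set K' := (\sum_(u in ~: component e x v2) \sum_(v in ~: component e x v2)
   dist (move_tree e (component e x v2) y1') u v)%N in hSe' hK.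
set AA' := (\sum_(u in component e x v2) \sum_(v in component e x v2)
   dist (move_tree e (component e x v2) y1') u v)%N in hSe' hAA.
set Z' := (\sum_(u in component e x v2) \sum_(v in ~: component e x v2)
   dist (move_tree e (component e x v2) y1') u v)%N in hSe' hZ'.
have Ew : wiener e = (K %/ 2 + ((q + (u + 2) + r) * (sT + (u + 1) * (q + 1))
      + (q + (u + 1)) * ((sT + (u + 2) * (q + 1)) + XR)
      + (A2 + (u + 1) * (s0 + q) + (u + 1) * u)))%N.
  rewrite /wiener hSe.
  have -> : (AA + 2 * Z + K = ((q + (u + 2) + r) * (sT + (u + 1) * (q + 1))
      + (q + (u + 1)) * ((sT + (u + 2) * (q + 1)) + XR)
      + (A2 + (u + 1) * (s0 + q) + (u + 1) * u)) * 2 + K)%N.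
    rewrite sdd2 hZ hXN hN sdx1 sdx2 cardC1 cardC2 hS; ring.
  by rewrite divnMDl // addnC.
have Ew' : wiener (move_tree e (component e x v2) y1') = (K %/ 2 +
      ((q + (u + 1)) * (q + u) + (q + (u + 1)) * ((s0 + (u + 2)) + r * q + XR
         + (q + (u + 2) + r))))%N.
  rewrite /wiener hSe' hK.
  have -> : (AA' + 2 * Z' + K = ((q + (u + 1)) * (q + u) + (q + (u + 1)) * ((s0 + (u + 2))
      + r * q + XR + (q + (u + 2) + r))) * 2 + K)%N.
    rewrite hAA hZ' hYN hYR hN sdb1 cardC1 cardC2 addnS /=; ring.
  by rewrite divnMDl // addnC.
rewrite Ew Ew' leq_add2l.
have E1 : dist e x y1 = (q + 1)%N by rewrite Dy1 addn1.
have E2 : #|T| = ((q + (u + 1)) + (q + (u + 2) + r))%N.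
  by rewrite -hn hN cardC1 cardC2; slia.
have E3 : #|leaves e (component e x v1)| = (u + 2)%N by rewrite Ht; slia.
rewrite E1 E2 E3.
apply: final_alg => //.
move: hT; clear; nia.
Qed.
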